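(* Let $G$ be a non-empty bipartite graph with parts $X$ and $Y$. Let $X_0=\{x\in X: d(x)=|Y|\}$, $X_1=X\setminus X_0$, $Y_0=\{y\in Y: d(y)=|X|\}$ and $Y_1=Y\setminus Y_0$. Suppose that (i) $|X|>|Y|$, and (ii) either $X_1=Y_1=\emptyset$, or $|X_0|/|Y_1|>2|X_1|/|Y_0|$. Then $G$ contains a collection of at most $\left\lceil \frac{|X|}{|Y|+1}\right\rceil$ paths which together cover all vertices of $G$.
   Context: $d(v)$ denotes the degree of $v$ in $G$. Paths may have length zero (a single vertex) and need not be vertex-disjoint. *)

(* Defs.v *)
From mathcomp Require Import all_boot all_order all_algebra.
Set Implicit Arguments. Unset Strict Implicit. Unset Printing Implicit Defensive.

Definition simple_graph (T : finType) (e : rel T) : Prop :=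
  symmetric e /\ irreflexive e.

Definition bipartition (T : finType) (e : rel T) (X Y : {set T}) : Prop :=
  [disjoint X & Y] /\ X :|: Y = [set: T] /\
  (forall u v, e u v -> (u \in X) && (v \in Y) || (u \in Y) && (v \in X)).

Definition deg (T : finType) (e : rel T) (v : T) : nat := #|[set u | e v u]|.

Definition is_path (T : finType) (e : rel T) (p : seq T) : Prop :=
  match p with
  | [::] => False
  | x :: q => path e x q && uniq p
  end.

Definition path_cover (T : finType) (e : rel T) (P : seq (seq T)) : Prop :=
  (forall p, p \in P -> is_path e p) /\ (forall v : T, exists2 p, p \in P & v \in p).

Definition ceil_div (a b : nat) : nat := (a + b.-1) %/ b.

(* Main.v *)
Require Import Defs.
From mathcomp Require Import all_boot all_order all_algebra.
From mathcomp Require Import zify.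
Import Order.TTheory GRing.Theory Num.Theory.


Fixpoint wt {T : Type} (xs ys : seq T) : seq T :=
  match xs, ys with
  | x' :: xs', y :: ys' => y :: x' :: wt xs' ys'
  | _, _ => [::]
  end.

Lemma mem_wt_xs (T : eqType) (xs ys : seq T) v :
  size xs <= size ys -> v \in xs -> v \in wt xs ys.
Proof.
elim: xs ys => [|x xs IH] [|y ys] //= Hs.
rewrite !inE => /orP[->|H]; first by rewrite orbT.
by rewrite IH ?orbT.
Qed.

Lemma mem_wt_ys (T : eqType) (xs ys : seq T) v :
  size ys <= size xs -> v \in ys -> v \in wt xs ys.
Proof.
elim: xs ys => [|x xs IH] [|y ys] //= Hs.
rewrite !inE => /orP[->|H]; first by [].
by rewrite IH ?orbT.
Qed.

Lemma mem_wt_sub (T : eqType) (xs ys : seq T) v :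
  v \in wt xs ys -> (v \in xs) || (v \in ys).
Proof.
elim: xs ys => [|x xs IH] [|y ys] //=.
rewrite !inE => /or3P[->|->|/IH/orP[]->]; rewrite ?orbT //.
Qed.

Lemma wt_uniq (T : eqType) (xs ys : seq T) :
  uniq xs -> uniq ys -> (forall u, u \in xs -> u \notin ys) -> uniq (wt xs ys).
Proof.
elim: xs ys => [|x xs IH] [|y ys] //= /andP[nx ux] /andP[ny uy] D.
have Dy : y \notin x :: xs.
  apply/negP=> Hy; have := D y Hy; by rewrite inE eqxx.
have Dx : x \notin ys.
  have := D x; rewrite !inE eqxx /= => /(_ isT); by rewrite negb_or => /andP[].
rewrite inE negb_or in Dy; case/andP: Dy => Dyx Dyxs.
have D' : forall u, u \in xs -> u \notin ys.
  move=> u Hu; have := D u; rewrite !inE Hu orbT negb_or => /(_ isT) /andP[].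
  done.
rewrite /= IH // andbT inE negb_or Dyx /=.
apply/andP; split.
  by apply/negP => /mem_wt_sub /orP[]; apply/negP.
by apply/negP => /mem_wt_sub /orP[]; apply/negP.
Qed.

Lemma path_wt0 (T : eqType) (e : rel T) (A B : pred T) :
  (forall x y, A x -> B y -> e x y && e y x) ->
  forall xs x ys, A x -> all A xs -> all B ys -> path e x (wt xs ys).
Proof.
move=> H; elim=> [|x' xs IH] x [|y ys] //= Ax /andP[Ax' As] /andP[By Bs].
have /andP[h1 _] := H _ _ Ax By.
have /andP[_ h2] := H _ _ Ax' By.
by rewrite h1 h2 IH.
Qed.

Lemma path_wt (T : eqType) (e : rel T) (A0 A1 B0 B1 : pred T) :
  (forall x y, A0 x -> B1 y -> e x y && e y x) ->
  (forall x y, A1 x -> B0 y -> e x y && e y x) ->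
  (forall x, A0 x -> A1 x) -> (forall y, B0 y -> B1 y) ->
  forall g1 g0 m0 m1, all A1 g1 -> all A0 g0 -> all B0 m0 -> all B1 m1 ->
  size g1 <= size m0 ->
  forall x xs, x :: xs = g1 ++ g0 -> path e x (wt xs (m0 ++ m1)).
Proof.
move=> H0 H1 A01 B01; elim=> [|z g1 IH] g0 m0 m1 /=.
  move=> _ Hg0 Hm0 Hm1 _ x xs Hx; rewrite -Hx /= in Hg0.
  case/andP: Hg0 => Ax Axs.
  apply: (@path_wt0 T e A0 B1 H0) => //; rewrite all_cat Hm1 andbT.
  by apply: sub_all Hm0.
move=> /andP[Az Ag1] Hg0 Hm0 Hm1 Hs x xs [Exz Exs]; subst z.
case: m0 Hm0 Hs => [|w m0] //= /andP[Bw Bm0] Hs.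
case: xs Exs => [|x' xs] //= Exs.
have Ax' : A1 x'.
  have : x' \in g1 ++ g0 by rewrite -Exs inE eqxx.
  rewrite mem_cat => /orP[] Hx'.
    by move/allP: Ag1 => /(_ _ Hx').
  by move/allP: Hg0 => /(_ _ Hx') /A01.
have /andP[h1 _] := H1 _ _ Az Bw.
have /andP[_ h2] := H1 _ _ Ax' Bw.
by rewrite h1 h2 (IH g0 m0 m1).
Qed.

Fixpoint build {T : Type} (c s k : nat) (L1 L0 : seq T) : seq (seq T) :=
  match k with
  | 0 => [::]
  | k'.+1 => (take c L1 ++ take (s - minn c (size L1)) L0)
             :: build c s k' (drop c L1) (drop (s - minn c (size L1)) L0)
  end.

Lemma size_build (T : Type) c s k (L1 L0 : seq T) : size (build c s k L1 L0) = k.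
Proof. by elim: k L1 L0 => [|k IH] L1 L0 //=; rewrite IH. Qed.

Lemma build_cover (T : eqType) c s k (L1 L0 : seq T) v :
  c <= s -> size L1 <= k * c -> size L1 + size L0 <= k * s ->
  v \in L1 ++ L0 -> exists2 g, g \in build c s k L1 L0 & v \in g.
Proof.
move=> Hcs; elim: k L1 L0 => [|k IH] L1 L0 /= H1 H2 Hv.
  have : size (L1 ++ L0) == 0 by rewrite size_cat; lia.
  by rewrite size_eq0 => /eqP E; rewrite E in Hv.
rewrite -(cat_take_drop c L1) -(cat_take_drop (s - minn c (size L1)) L0) in Hv.
rewrite !mem_cat in Hv.
case/orP: Hv => [/orP[] Hv|/orP[] Hv].
- by exists (take c L1 ++ take (s - minn c (size L1)) L0);
    rewrite ?inE ?eqxx // mem_cat Hv.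
- case: (IH (drop c L1) (drop (s - minn c (size L1)) L0)).
  + rewrite size_drop; rewrite mulSn in H1; lia.
  + have := leq_mul (leqnn k) Hcs.
    rewrite !size_drop; rewrite !mulSn in H1 H2; lia.
  + by rewrite mem_cat Hv.
  + by move=> g Hg Hvg; exists g; rewrite // inE Hg orbT.
- by exists (take c L1 ++ take (s - minn c (size L1)) L0);
    rewrite ?inE ?eqxx // mem_cat Hv orbT.
- case: (IH (drop c L1) (drop (s - minn c (size L1)) L0)).
  + rewrite size_drop; rewrite mulSn in H1; lia.
  + have := leq_mul (leqnn k) Hcs.
    rewrite !size_drop; rewrite !mulSn in H1 H2; lia.
  + by rewrite mem_cat Hv orbT.
  + by move=> g Hg Hvg; exists g; rewrite // inE Hg orbT.
Qed.

Lemma build_groups (T : eqType) c s k (L1 L0 : seq T) g :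
  c <= s -> g \in build c s k L1 L0 -> exists g1 g0,
   [/\ g = g1 ++ g0, {subset g1 <= L1}, {subset g0 <= L0},
       (uniq L1 -> uniq g1) /\ (uniq L0 -> uniq g0) &
       size g1 <= c /\ size g <= s].
Proof.
move=> Hcs; elim: k L1 L0 => [|k IH] L1 L0 //=.
rewrite inE => /orP[/eqP ->|Hg].
  exists (take c L1), (take (s - minn c (size L1)) L0); split => //.
  - by move=> u /mem_take.
  - by move=> u /mem_take.
  - by split; apply: take_uniq.
  - rewrite size_cat !size_take_min; lia.
have [g1 [g0 [E S1 S0 [U1 U0] Sz]]] := IH _ _ Hg.
exists g1, g0; split => //.
- by move=> u /S1 /mem_drop.
- by move=> u /S0 /mem_drop.
- by split => U; [apply: U1 | apply: U0]; apply: drop_uniq.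
Qed.
Arguments build_groups {T c s k L1 L0 g}.
Arguments build_cover {T c s k L1 L0 v}.
Arguments mem_wt_sub {T xs ys v}.
Arguments mem_wt_xs {T xs ys v}.
Arguments mem_wt_ys {T xs ys v}.
Arguments wt_uniq {T xs ys}.


Theorem lemma2p4 (T : finType) (e : rel T) (X Y : {set T}) :
  simple_graph e ->
  bipartition e X Y ->
  0 < #|T| ->
  let X0 := [set x in X | deg e x == #|Y|] in
  let X1 := X :\: X0 in
  let Y0 := [set y in Y | deg e y == #|X|] in
  let Y1 := Y :\: Y0 in
  #|X| > #|Y| ->
  ((X1 == set0) && (Y1 == set0) \/
   (0 < #|Y1|)%N /\ (0 < #|Y0|)%N /\
   ((#|X0|%:R / #|Y1|%:R : rat) > 2 * #|X1|%:R / #|Y0|%:R)%R) ->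
  exists P : seq (seq T),
    path_cover e P /\ (size P <= ceil_div #|X| (#|Y| + 1))%N.
Proof.
move=> [esym eirr] [dXY [UXY eXY]] _ X0 X1 Y0 Y1 HXY Hcase.
have XnY : forall x, x \in X -> x \notin Y.
  move=> x Hx; apply/negP => Hy.
  by move/pred0P: dXY => /(_ x) /=; rewrite Hx Hy.
have X0X : forall x, x \in X0 -> x \in X by move=> x; rewrite inE => /andP[].
have Y0Y : forall y, y \in Y0 -> y \in Y by move=> y; rewrite inE => /andP[].
have F1 : forall x y, x \in X0 -> y \in Y -> e x y && e y x.
  move=> x y; rewrite inE => /andP[Hx /eqP Hd] Hy.
  have Hsub : [set u | e x u] \subset Y.
    apply/subsetP => u; rewrite inE => /eXY.
    by rewrite Hx (negbTE (XnY _ Hx)) /= ?orbF.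
  have Heq : [set u | e x u] == Y by rewrite eqEcard Hsub -Hd leqnn.
  rewrite -(eqP Heq) inE in Hy.
  by rewrite Hy esym Hy.
have F2 : forall x y, x \in X -> y \in Y0 -> e x y && e y x.
  move=> x y Hx; rewrite inE => /andP[Hy /eqP Hd].
  have Hsub : [set u | e y u] \subset X.
    apply/subsetP => u; rewrite inE => /eXY.
    have nyX : y \notin X by apply/negP => /XnY; rewrite Hy.
    by rewrite Hy (negbTE nyX) /=.
  have Heq : [set u | e y u] == X by rewrite eqEcard Hsub -Hd leqnn.
  rewrite -(eqP Heq) inE in Hx.
  by rewrite Hx esym Hx.
have hX : #|X| = #|X0| + #|X1|.
  have sub : X0 \subset X by apply/subsetP.
  by rewrite -(cardsID X0 X) (setIidPr sub).
have hY : #|Y| = #|Y0| + #|Y1|.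
  have sub : Y0 \subset Y by apply/subsetP.
  by rewrite -(cardsID Y0 Y) (setIidPr sub).
set a := #|X0| in hX Hcase; set b := #|X1| in hX Hcase.
set c := #|Y0| in hY Hcase; set d := #|Y1| in hY Hcase.
set n := #|X| in hX HXY *; set m := #|Y| in hY HXY *.
set k := ceil_div n (m + 1).
have N1 : n <= k * m.+1.
  have := divn_eq (n + m) (m + 1); have := ltn_pmod (n + m) (ltn0Sn m).
  rewrite /k /ceil_div addn1 /=; lia.
have [N2 N3] : b <= k * c /\ m.+1 - minn c b <= a.
  case: Hcase => [/andP[/eqP E1 /eqP E2]|[Hd [Hc H]]].
    have b0 : b = 0 by rewrite /b E1 cards0.
    have d0 : d = 0 by rewrite /d E2 cards0.
    rewrite b0; split; lia.
  have Hr : (2 * b * d < a * c)%N.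
    move: H; rewrite ltr_pdivrMr ?ltr0n // mulrAC ltr_pdivlMr ?ltr0n //.
    by rewrite -!natrM ltr_nat.
  split.
    rewrite leqNgt; apply/negP => Hlt.
    have h1 := leq_mul (leqnn c) N1.
    have h2 := leq_mul Hlt (leqnn m.+1).
    nia.
  case: (leqP c b) => Hcb.
    have : 2 * c * d <= 2 * b * d by rewrite leq_mul2r leq_mul2l Hcb !orbT.
    nia.
  lia.
have Hcs : c <= m.+1 by lia.
have [v0 _] : exists v, v \in X by apply/card_gt0P; lia.
set ys := enum Y0 ++ enum Y1.
set L1 := enum X1; set L0 := enum X0.
have sL1 : size L1 = b by rewrite /L1 -cardE.
have sL0 : size L0 = a by rewrite /L0 -cardE.
have sys : size ys = m by rewrite /ys size_cat -!cardE.
have ysY : forall y, y \in ys -> y \in Y.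
  move=> y; rewrite mem_cat !mem_enum => /orP[/Y0Y -> //|]; by rewrite inE => /andP[_ ->].
have Uys : uniq ys.
  rewrite cat_uniq !enum_uniq /= andbT; apply/hasPn => u.
  by rewrite !mem_enum inE => /andP[].
have L1X : forall u, u \in L1 -> u \in X by move=> u; rewrite mem_enum inE => /andP[].
pose mk (g : seq T) := if g is x :: xs then x :: wt xs ys else [:: v0].
pose P := map mk (build c m.+1 k L1 L0).
exists P.
split; last by rewrite size_map size_build.
split.
  move=> p /mapP [g Hg ->].
  have [g1 [g0 [E S1 S0 [U1 U0] [Sz1 Sz]]]] := build_groups Hcs Hg.
  case: g E Hg Sz => [|x xs] E Hg Sz //=.
  have gX : forall u, u \in x :: xs -> u \in X.
    move=> u; rewrite E mem_cat => /orP[/S1/L1X //|/S0]; rewrite mem_enum; exact: X0X.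
  have Ug : uniq (x :: xs).
    rewrite E cat_uniq U1 ?U0 ?enum_uniq //= andbT.
    apply/hasPn => u /S0; rewrite mem_enum => Hu; apply/negP => /S1.
    by rewrite mem_enum inE Hu.
  apply/andP; split.
    apply: (@path_wt T e (fun u => u \in X0) (fun u => u \in X) (fun u => u \in Y0)
              (fun u => u \in Y) F1 F2 X0X Y0Y g1 g0 (enum Y0) (enum Y1)) => //.
    - by apply/allP => u /S1 /L1X.
    - by apply/allP => u /S0; rewrite mem_enum.
    - by apply/allP => u; rewrite mem_enum.
    - by apply/allP => u; rewrite mem_enum inE => /andP[].
    - by rewrite -cardE.
  case/andP: Ug => nx Uxs.
  rewrite /= wt_uniq // ?andbT.
  - apply/negP => /mem_wt_sub /orP[H1|H1]; first by rewrite H1 in nx.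
    by have := XnY x (gX x (mem_head _ _)); rewrite (ysY _ H1).
  - move=> u Hu; apply/negP => /ysY Hy.
    by have := XnY u (gX u ltac:(by rewrite inE Hu orbT)); rewrite Hy.
move=> v; have : v \in X :|: Y by rewrite UXY inE.
rewrite in_setU => /orP[Hv|Hv].
  have HvL : v \in L1 ++ L0.
    rewrite mem_cat !mem_enum; case: (boolP (v \in X0)) => H0; first by rewrite orbT.
    by rewrite inE H0 Hv.
  have HL1 : size L1 <= k * c by rewrite sL1.
  have HL : size L1 + size L0 <= k * m.+1 by rewrite sL1 sL0 addnC -hX.
  have [g Hg Hvg] := build_cover Hcs HL1 HL HvL.
  exists (mk g); first exact: map_f.
  case: g Hg Hvg => [|x xs] Hg Hvg //=.
  have [g1 [g0 [_ _ _ _ [_ Sz]]]] := build_groups Hcs Hg.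
  rewrite inE in Hvg; case/orP: Hvg => [/eqP ->|Hxs]; first exact: mem_head.
  rewrite inE; apply/orP; right; apply: mem_wt_xs Hxs.
  rewrite sys; move: Sz => /=; lia.
have Hk : 0 < k.
  rewrite lt0n; apply/negP => /eqP k0; rewrite k0 in N1; lia.
rewrite /P -(prednK Hk) /=.
set gf := take c L1 ++ take (m.+1 - minn c (size L1)) L0.
exists (mk gf); first by rewrite inE eqxx.
have Sgf : size gf = m.+1 by rewrite /gf size_cat !size_take_min sL1 sL0; lia.
case: gf Sgf => [|x xs] //= [Sxs].
rewrite inE; apply/orP; right; apply: mem_wt_ys; first by rewrite sys Sxs.
rewrite mem_cat !mem_enum; case: (boolP (v \in Y0)) => H0 //.
by rewrite orbC inE H0 Hv.
Qed.
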